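(* If $X\subset\mathbb{R}^n$ is a set of linearly separable labeled points in strong general position, then the orthogonal projections of the convex hulls of the positive and negative support vectors onto the separating hyperplane intersect at a single Radon point.
   Context: Setting: hard-margin support vector machine. We are given data points $\mathbf{x}_1,\dots,\mathbf{x}_m\in\mathbb{R}^n$ with labels $y_i\in\{-1,1\}$, assumed linearly separable. The SVM solves $\arg\min_{\mathbf{w},b}\frac12\|\mathbf{w}\|^2$ subject to $y_i(\mathbf{w}^T\mathbf{x}_i+b)\ge 1$ for all $i$. The separating hyperplane is $\{\mathbf{x}:\mathbf{w}^T\mathbf{x}+b=0\}$, and the support vectors are the $\mathbf{x}_i$ with $y_i(\mathbf{w}^T\mathbf{x}_i+b)=1$ (those lying on the margin). By the KKT conditions, $\mathbf{w}=\sum_i \alpha_i y_i\mathbf{x}_i$ with Lagrange multipliers $\alpha_i\ge 0$ and $\sum_i\alpha_i y_i=0$. A $k$-flat is a $k$-dimensional affine subspace. A labeled linearly separable set $X\subseteq\mathbb{R}^n$ is in strong general position if (i) for $k+l\le n$, no disjoint $k$-flats and $l$-flats (spanned by points of $X$) contain parallel vectors; and (ii) when the SVM is applied to $X$, the vector $\mathbf{w}$ can be uniquely written as $\mathbf{w}=\sum_{i:\alpha_i>0}\alpha_i y_i\mathbf{x}_i$ with $\alpha_i\ge 0$. Writing $X=X_-\cup X_+$ and letting $\rho$ be the orthogonal projection onto the separating hyperplane, a Radon point is a point in $\rho(\mathrm{conv}(X_-))\cap\rho(\mathrm{conv}(X_+))$, where $\mathrm{conv}$ denotes convex hull. *)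

(* Defs.v *)
From HB Require Import structures.
From mathcomp Require Import all_boot all_order all_algebra.
From mathcomp Require Import reals.
Set Implicit Arguments. Unset Strict Implicit. Unset Printing Implicit Defensive.
Import Order.TTheory GRing.Theory Num.Theory.
Local Open Scope ring_scope.

Section SVM.
Variables (R : realType) (n m : nat).
Implicit Types (x : 'I_m -> 'rV[R]_n) (y : 'I_m -> R) (w p q v : 'rV[R]_n)
  (b : R) (c : 'I_m -> R) (S : {set 'I_m}).

Definition dotv (u v : 'rV[R]_n) : R := \sum_(k < n) u 0 k * v 0 k.

Definition lincomb x c : 'rV[R]_n := \sum_(i < m) c i *: x i.

Definition supported c S := forall i, i \notin S -> c i = 0.

Definition in_conv x S p := exists c, supported c S /\ (forall i, 0 <= c i)
  /\ \sum_(i < m) c i = 1 /\ p = lincomb x c.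

Definition in_aff x S p := exists c, supported c S
  /\ \sum_(i < m) c i = 1 /\ p = lincomb x c.

Definition in_dir x S v := exists c, supported c S
  /\ \sum_(i < m) c i = 0 /\ v = lincomb x c.

Definition aff_indep x S := forall c, supported c S ->
  \sum_(i < m) c i = 0 -> lincomb x c = 0 -> forall i, c i = 0.

Definition svm_feasible x y w b := forall i, 1 <= y i * (dotv w (x i) + b).

Definition svm_opt x y w b := svm_feasible x y w b /\
  forall w' b', svm_feasible x y w' b' -> dotv w w / 2 <= dotv w' w' / 2.

Definition lin_separable x y :=
  exists w b, forall i, 0 < y i * (dotv w (x i) + b).

Definition sv_set x y w b (s : R) : {set 'I_m} :=
  [set i | (y i == s) && (y i * (dotv w (x i) + b) == 1)].

Definition kkt_mult x y w b (alpha : 'I_m -> R) :=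
  (forall i, 0 <= alpha i) /\
  (forall i, 0 < alpha i -> y i * (dotv w (x i) + b) = 1) /\
  \sum_(i < m) alpha i * y i = 0 /\
  w = \sum_(i < m) (alpha i * y i) *: x i.

(* (i): for k + l <= n, disjoint k-flats and l-flats spanned by points of X
   contain no common (parallel) nonzero direction.  A k-flat spanned by points
   of X is the affine hull of k+1 affinely independent points of X. *)
Definition sgp_flats x := forall A B : {set 'I_m},
  A != set0 -> B != set0 -> aff_indep x A -> aff_indep x B ->
  ((#|A| - 1) + (#|B| - 1) <= n)%N ->
  (forall p, ~ (in_aff x A p /\ in_aff x B p)) ->
  forall v, in_dir x A v -> in_dir x B v -> v = 0.

Definition sgp_unique_mult x y := forall w b, svm_opt x y w b ->
  exists! alpha, kkt_mult x y w b alpha.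

Definition strong_general_position x y := sgp_flats x /\ sgp_unique_mult x y.

Definition proj w b p : 'rV[R]_n := p - ((dotv w p + b) / dotv w w) *: w.

Definition in_proj_conv x w b S p := exists q, in_conv x S q /\ p = proj w b q.

End SVM.

(* Main.v *)
Require Import Defs.
From HB Require Import structures.
From mathcomp Require Import all_boot all_order all_algebra.
From mathcomp Require Import reals.
From mathcomp Require Import ring lra.
Import Order.TTheory GRing.Theory Num.Theory.
Local Open Scope ring_scope.

Lemma dotvDr (R : realType) (n : nat) (u v1 v2 : 'rV[R]_n) :
  dotv u (v1 + v2) = dotv u v1 + dotv u v2.
Proof. by rewrite /dotv -big_split; apply: eq_bigr => k _; rewrite mxE mulrDr. Qed.

Lemma dotvZr (R : realType) (n : nat) (u v : 'rV[R]_n) (a : R) :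
  dotv u (a *: v) = a * dotv u v.
Proof. by rewrite /dotv mulr_sumr; apply: eq_bigr => k _; rewrite mxE mulrCA. Qed.

Lemma dotv0r (R : realType) (n : nat) (u : 'rV[R]_n) : dotv u 0 = 0.
Proof. by rewrite /dotv big1 // => k _; rewrite mxE mulr0. Qed.

Lemma dotv_sumr (R : realType) (n : nat) (u : 'rV[R]_n) (I : Type) (r : seq I)
  (P : pred I) (F : I -> 'rV[R]_n) :
  dotv u (\sum_(i <- r | P i) F i) = \sum_(i <- r | P i) dotv u (F i).
Proof.
elim/big_rec2: _ => [|i a v _ <-]; first exact: dotv0r.
by rewrite dotvDr.
Qed.

Lemma dotv_lincomb (R : realType) (n m : nat) (u : 'rV[R]_n)
  (x : 'I_m -> 'rV[R]_n) (c : 'I_m -> R) :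
  dotv u (lincomb x c) = \sum_i c i * dotv u (x i).
Proof. by rewrite /lincomb dotv_sumr; apply: eq_bigr => i _; rewrite dotvZr. Qed.

Lemma conv_val (R : realType) (n m : nat) (x : 'I_m -> 'rV[R]_n)
  (y : 'I_m -> R) (w : 'rV[R]_n) (b s : R) q :
  s * s = 1 -> in_conv x (sv_set x y w b s) q -> dotv w q + b = s.
Proof.
move=> ss [c [cs [c0 [c1 ->]]]].
rewrite dotv_lincomb -[b]mul1r -c1 mulr_suml -big_split /= -[s]mulr1 -c1 mulr_sumr.
apply: eq_bigr => i _.
case: (boolP (i \in sv_set x y w b s)) => [|/cs ->]; last first.
  by rewrite !(mul0r, mulr0, addr0).
rewrite inE => /andP[/eqP yi /eqP h].
have e : dotv w (x i) + b = s.
  by rewrite -[LHS]mul1r -ss -mulrA -yi h mulr1.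
by rewrite -mulrDr e mulrC.
Qed.

Arguments conv_val {R n m x y w b s q}.

Theorem lemma5p2 (R : realType) (n m : nat) (x : 'I_m -> 'rV[R]_n)
  (y : 'I_m -> R) (w : 'rV[R]_n) (b : R) :
  injective x ->
  (forall i, y i = 1 \/ y i = -1) ->
  (exists i, y i = 1) -> (exists i, y i = -1) ->
  lin_separable x y ->
  strong_general_position x y ->
  svm_opt x y w b ->
  exists! p : 'rV[R]_n,
    in_proj_conv x w b (sv_set x y w b (-1)) p /\
    in_proj_conv x w b (sv_set x y w b 1) p.
Proof.
move=> _ ylab [ip yp] [im ym] _ [_ Huniq] Hopt.
have Hfeas := Hopt.1.
set D := dotv w w.
have D_gt0 : 0 < D.
  have D_ge0 : 0 <= D by rewrite /D /dotv sumr_ge0 // => j _; rewrite -expr2 sqr_ge0.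
  rewrite lt0r D_ge0 andbT; apply/negP => /eqP D0.
  have w0 : forall v, dotv w v = 0.
    move=> v; rewrite /dotv big1 // => j _.
    have := @psumr_eq0P R _ predT (fun j => w 0 j * w 0 j) _ D0 j isT.
    by move=> /(_ _)/eqP; rewrite mulf_eq0 orbb => /(_ _)/eqP ->; rewrite ?mul0r // => k _; rewrite -expr2 sqr_ge0.
  have := Hfeas ip; have := Hfeas im; rewrite !w0 !add0r yp ym; lra.
have D0 : D != 0 by rewrite gt_eqF.
have HD : dotv w w = D by [].
clearbody D.
set k := D / 2.
have Hk : k = D / 2 by [].
clearbody k.
have k0 : k != 0 by rewrite Hk mulf_neq0 // invr_eq0 pnatr_eq0.
have k_ge0 : 0 <= k by rewrite Hk; lra.
have sq1 : (1:R) * 1 = 1 by rewrite mulr1.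
have sqm : (-1:R) * (-1) = 1 by rewrite mulrNN mulr1.
have hn1 : ((-1:R) == 1) = false by apply/negP => /eqP; lra.
have h1n : ((1:R) == -1) = false by apply/negP => /eqP; lra.
have keyA : forall q1 q2, in_conv x (sv_set x y w b 1) q1 ->
    in_conv x (sv_set x y w b (-1)) q2 -> proj w b q1 = proj w b q2 ->
    w = k *: (q1 - q2).
  move=> q1 q2 h1 h2 e.
  have v1 := conv_val sq1 h1; have v2 := conv_val sqm h2.
  apply/rowP => j; have := congr1 (fun v : 'rV_n => v 0 j) e.
  rewrite /proj v1 v2 HD !mxE => e'.
  have -> : q1 0 j = q2 0 j + 2 / D * w 0 j.
    by rewrite -[q1 0 j](subrK (1 / D * w 0 j)) e'; field.
  by rewrite Hk; field.

have keyB : forall c1 c2,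
    in_conv x (sv_set x y w b 1) (lincomb x c1) ->
    supported c1 (sv_set x y w b 1) -> (forall i, 0 <= c1 i) ->
    \sum_i c1 i = 1 ->
    supported c2 (sv_set x y w b (-1)) -> (forall i, 0 <= c2 i) ->
    \sum_i c2 i = 1 ->
    proj w b (lincomb x c1) = proj w b (lincomb x c2) ->
    kkt_mult x y w b (fun i => k * (c1 i + c2 i)).
  move=> c1 c2 hc1 cs1 cp1 cs1' cs2 cp2 cs2' e.
  have hc2 : in_conv x (sv_set x y w b (-1)) (lincomb x c2).
    by exists c2.
  have hy1 : forall i, c1 i * y i = c1 i.
    move=> i; case: (boolP (i \in sv_set x y w b 1)) => [|/cs1 ->]; last by rewrite mul0r.
    by rewrite inE => /andP[/eqP -> _]; rewrite mulr1.
  have hy2 : forall i, c2 i * y i = - c2 i.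
    move=> i; case: (boolP (i \in sv_set x y w b (-1))) => [|/cs2 ->]; last by rewrite mul0r oppr0.
    by rewrite inE => /andP[/eqP -> _]; rewrite mulrN1.
  split; [|split; [|split]].
  - by move=> i; rewrite mulr_ge0 // addr_ge0.
  - move=> i bp.
    case: (boolP (i \in sv_set x y w b 1)) => [|n1].
      by rewrite inE => /andP[_ /eqP].
    case: (boolP (i \in sv_set x y w b (-1))) => [|n2].
      by rewrite inE => /andP[_ /eqP].
    by move: bp; rewrite (cs1 _ n1) (cs2 _ n2) addr0 mulr0 ltxx.
  - rewrite (eq_bigr (fun i => k * (c1 i - c2 i))); last first.
      by move=> i _; rewrite -mulrA mulrDl hy1 hy2.
    by rewrite -mulr_sumr sumrB cs1' cs2' subrr mulr0.
  - rewrite {1}(keyA _ _ hc1 hc2 e) /lincomb -sumrB scaler_sumr.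
    apply: eq_bigr => i _.
    by rewrite -scalerBl scalerA -mulrA mulrDl hy1 hy2.
have [alpha [[a0 [a1 [a2 a3]]] Hau]] := Huniq w b Hopt.
have sumD : \sum_i alpha i = D.
  rewrite -HD {2}a3 dotv_sumr [RHS](eq_bigr (fun i => alpha i - alpha i * y i * b)); last first.
    move=> i _; rewrite dotvZr.
    have [->|an] := eqVneq (alpha i) 0; first by rewrite !mul0r subr0.
    have /a1 h : 0 < alpha i by rewrite lt0r an a0.
    have -> : alpha i * y i * dotv w (x i) =
      alpha i * (y i * (dotv w (x i) + b)) - alpha i * y i * b by ring.
    by rewrite h mulr1.
  by rewrite sumrB -mulr_suml a2 mul0r subr0.
set P := \sum_i (if y i == 1 then alpha i else 0).
set N := \sum_i (if y i == 1 then 0 else alpha i).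
have PN1 : P + N = D.
  rewrite -sumD /P /N -big_split; apply: eq_bigr => i _.
  by case: ifP => _ /=; rewrite ?addr0 ?add0r.
have PN2 : P - N = 0.
  rewrite -a2 /P /N -sumrB; apply: eq_bigr => i _.
  by case: (ylab i) => ->; rewrite ?eqxx ?hn1 ?subr0 ?sub0r ?mulr1 ?mulrN1.
have Pk : P = k by rewrite Hk; lra.
pose c1 i := if y i == 1 then alpha i / k else 0.
pose c2 i := if y i == 1 then 0 else alpha i / k.
have cs1 : supported c1 (sv_set x y w b 1).
  move=> i; rewrite /c1 inE; case: ifP => yi //=.
  have [->|an] := eqVneq (alpha i) 0; first by rewrite mul0r.
  have /a1 -> : 0 < alpha i by rewrite lt0r an a0.
  by rewrite eqxx.
have cs2 : supported c2 (sv_set x y w b (-1)).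
  move=> i; rewrite /c2 inE; case: ifP => yi //=.
  have [->|an] := eqVneq (alpha i) 0; first by rewrite mul0r.
  have /a1 -> : 0 < alpha i by rewrite lt0r an a0.
  by case: (ylab i) yi => ->; rewrite ?eqxx.
have cp1 : forall i, 0 <= c1 i.
  by move=> i; rewrite /c1; case: ifP => // _; rewrite divr_ge0.
have cp2 : forall i, 0 <= c2 i.
  by move=> i; rewrite /c2; case: ifP => // _; rewrite divr_ge0.
have cs1' : \sum_i c1 i = 1.
  rewrite -(divff k0) -{1}Pk /P mulr_suml; apply: eq_bigr => i _.
  by rewrite /c1; case: ifP => // _; rewrite mul0r.
have cs2' : \sum_i c2 i = 1.
  have Nk : N = k by rewrite Hk; lra.
  rewrite -(divff k0) -{1}Nk /N mulr_suml; apply: eq_bigr => i _.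
  by rewrite /c2; case: ifP => // _; rewrite mul0r.
have hc1 : in_conv x (sv_set x y w b 1) (lincomb x c1) by exists c1.
have hc2 : in_conv x (sv_set x y w b (-1)) (lincomb x c2) by exists c2.
have hq : lincomb x c1 - lincomb x c2 = k^-1 *: w.
  rewrite /lincomb -sumrB a3 scaler_sumr; apply: eq_bigr => i _.
  rewrite -scalerBl scalerA; congr (_ *: _); rewrite /c1 /c2.
  by case: (ylab i) => ->; rewrite ?eqxx ?hn1; ring.
have eproj : proj w b (lincomb x c1) = proj w b (lincomb x c2).
  have v1 := conv_val sq1 hc1; have v2 := conv_val sqm hc2.
  apply/rowP => j; rewrite /proj v1 v2 HD !mxE.
  have := congr1 (fun v : 'rV_n => v 0 j) hq; rewrite !mxE => hq'.
  rewrite -[lincomb x c1 0 j](subrK (lincomb x c2 0 j)) hq' Hk; field.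
  by rewrite D0.
exists (proj w b (lincomb x c1)); split.
  split; last by exists (lincomb x c1).
  by exists (lincomb x c2).
move=> p' [[q2' [[d2 [ds2 [dp2 [dsum2 ->]]]] ->]] [q1' [[d1 [ds1 [dp1 [dsum1 ->]]]] e']]].
have hd1 : in_conv x (sv_set x y w b 1) (lincomb x d1) by exists d1.
have /Hau hb := keyB d1 d2 hd1 ds1 dp1 dsum1 ds2 dp2 dsum2 (esym e').
rewrite e'; congr proj; apply: eq_bigr => i _; congr (_ *: _).
have := congr1 (fun f => f i) hb => /= hi.
rewrite /c1; case: ifP => yi.
  have d20 : d2 i = 0 by apply: ds2; rewrite inE (eqP yi) h1n.
  by rewrite hi d20 addr0 mulrC mulKf.
have d10 : d1 i = 0 by apply: ds1; rewrite inE yi.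
by rewrite d10.
Qed.
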